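(* Let $A\in\mathbb R^{m\times d}$, $B\in\mathbb R^{\ell\times d}$ with $\ker B=\{0\}$, and let $v\in\mathbb S^{d-1}$ be such that $v$ is not a generalized eigenvector of $(A^TA,B^TB)$. Let $x\sim\mathcal U(\mathbb S^{d-1})$ and set $a=\|Av\|^2$, $b=\langle Av,Ax\rangle$, $c=\|Ax\|^2$, $d_v=\|Bv\|^2$, $e=\langle Bv,Bx\rangle$, $f_x=\|Bx\|^2$, $\alpha=bd_v-ae$, $\gamma=ce-bf_x$. Then almost surely $\gamma\neq0$ and $\alpha\neq0$.
   Context: A generalized eigenvector of $(A^TA,B^TB)$ is a vector $w\neq0$ with $A^TAw=\lambda B^TBw$ for some $\lambda\in\mathbb R$. $\mathcal U(\mathbb S^{d-1})$ is the uniform probability measure on the Euclidean unit sphere $\mathbb S^{d-1}\subset\mathbb R^d$. *)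

(* Defs.v *)
From mathcomp Require Import all_boot all_order all_algebra.
From mathcomp Require Import all_classical all_reals all_analysis.
Set Implicit Arguments. Unset Strict Implicit. Unset Printing Implicit Defensive.
Import Order.TTheory GRing.Theory Num.Theory.
Local Open Scope classical_set_scope.
Local Open Scope ring_scope.

Section Defs.
Variable R : realType.

Definition dotv d (u w : 'cV[R]_d) : R := \sum_(i < d) u i ord0 * w i ord0.
Definition sqnorm d (u : 'cV[R]_d) : R := dotv u u.

Definition usphere d : set 'cV[R]_d := [set x | sqnorm x = 1].

Definition box d (a b : 'I_d -> R) : set 'cV[R]_d :=
  [set x | forall i, a i <= x i ord0 <= b i].
Definition box_vol d (a b : 'I_d -> R) : R := \prod_(i < d) Num.max (b i - a i) 0.

Definition leb_outer d (S : set 'cV[R]_d) : \bar R :=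
  ereal_inf [set s | exists (a b : nat -> 'I_d -> R),
      S `<=` \bigcup_k box (a k) (b k) /\
      s = (\sum_(0 <= k <oo) (box_vol (a k) (b k))%:E)%E].

Definition cone d (S : set 'cV[R]_d) : set 'cV[R]_d :=
  [set y | exists t x, 0 < t <= 1 /\ S x /\ y = t *: x].

(* uniform probability measure on S^{d-1} (normalized cone measure, which
   coincides with normalized surface measure), as an outer measure *)
Definition unif_sphere d (S : set 'cV[R]_d) : \bar R :=
  (fine (leb_outer (cone (S `&` (@usphere d)))) / fine (leb_outer (cone ((@usphere d)))))%:E.

Definition unif_sphere_as d (P : 'cV[R]_d -> Prop) : Prop :=
  unif_sphere [set x | (@usphere d) x /\ ~ P x] = 0%E.

Definition gen_eigvec m l d (A : 'M[R]_(m, d)) (B : 'M[R]_(l, d)) (w : 'cV[R]_d) :=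
  w != 0 /\ exists lam : R, (A^T *m A) *m w = lam *: ((B^T *m B) *m w).

End Defs.

(* Main.v *)
Require Import Defs.
From mathcomp Require Import all_boot all_order all_algebra.
From mathcomp Require Import all_classical all_reals all_analysis.
From mathcomp Require Import ring lra zify.
Import Order.TTheory GRing.Theory Num.Theory.

Fixpoint chain (p : pred nat) (g n : nat) (m : nat) (a : nat) : Prop :=
  match m with
  | 0 => True
  | m'.+1 => exists s, a <= s < n /\ p s /\ chain p g n m' (s + g)
  end.

Lemma chain_mono p g n m a b : a <= b -> chain p g n m b -> chain p g n m a.
Proof.
case: m => [//|m] ab [s [/andP[bs sn] [ps c]]].
by exists s; split => //; rewrite (leq_trans ab bs).
Qed.

Lemma sum_bool_le (p : pred nat) a b : \sum_(a <= s < b) (p s : nat) <= b - a.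
Proof.
apply: (@leq_trans (\sum_(a <= s < b) 1)); first by apply: leq_sum => i _; case: (p i).
by rewrite sum_nat_const_nat muln1.
Qed.

Lemma chain_count (p : pred nat) g n : 0 < g ->
  forall k m a, n - a <= k -> ~ chain p g n m.+1 a ->
  \sum_(a <= s < n) (p s : nat) <= m * g.
Proof.
move=> g0; elim=> [|k IH] m a hk hc.
  by rewrite big_geq //; lia.
case: (leqP n a) => [na|an]; first by rewrite big_geq.
rewrite big_ltn //.
case pa: (p a) => /=.
  case: m hc => [|m] hc.
    by exfalso; apply: hc; exists a; rewrite leqnn an.
  have hc' : ~ chain p g n m.+1 (a + g).
    by move=> c; apply: hc; exists a; rewrite leqnn an.
  case: (leqP (a + g) n) => ag.
    rewrite (@big_cat_nat _ _ _ (a + g)) //=; last by lia.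
    have h1 := sum_bool_le p a.+1 (a + g).
    have h2 : \sum_(a + g <= s < n) (p s : nat) <= m * g.
      apply: IH hc'; lia.
    rewrite mulSn; lia.
  have h1 := sum_bool_le p a.+1 n.
  rewrite mulSn; lia.
rewrite add0n; apply: (IH m a.+1); first by lia.
by move=> c; apply: hc; exact: (@chain_mono p g n m.+1 a a.+1 (leqnSn a) c).
Qed.

Local Open Scope classical_set_scope.
Local Open Scope ring_scope.

Lemma box_vol_empty (R : realType) d' :
  box_vol (fun _ : 'I_d'.+1 => 1 : R) (fun _ => 0) = 0.
Proof.
rewrite /box_vol big_ord_recl.
have -> : Num.max (0 - 1) 0 = 0 :> R by rewrite sub0r; apply/max_idPr; rewrite lerN10.
by rewrite mul0r.
Qed.

Lemma leb_outer_fin (R : realType) d' (I : finType) (sel : pred I)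
  (a b : I -> 'I_d'.+1 -> R) (S : set 'cV[R]_d'.+1) :
  (forall x, S x -> exists2 i, sel i & box (a i) (b i) x) ->
  (leb_outer S <= (\sum_(i | sel i) box_vol (a i) (b i))%:E)%E.
Proof.
move=> H.
set e := [seq i <- enum I | sel i].
pose A k := if onth e k is Some i then a i else fun _ : 'I_d'.+1 => 1 : R.
pose B k := if onth e k is Some i then b i else fun _ : 'I_d'.+1 => 0 : R.
pose G (o : option I) := if o is Some i then box_vol (a i) (b i) else 0.
have AB k : box_vol (A k) (B k) = G (onth e k).
  by rewrite /A /B /G; case: (onth e k) => // ; rewrite box_vol_empty.
apply: ereal_inf_lbound; exists A, B; split.
  move=> x Sx; case: (H x Sx) => i si bx.
  have ie : i \in e by rewrite mem_filter si mem_enum.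
  exists (index i e) => //.
  by rewrite /A /B; rewrite (_ : onth e (index i e) = Some i) //;
     rewrite onthE (nth_map i) ?index_mem // nth_index.
have G0 o : 0 <= G o.
  case: o => [i|] //=; rewrite /box_vol; apply: prodr_ge0 => k _.
  by rewrite le_max lexx orbT.
rewrite (nneseries_split 0 (size e)); last first.
  by move=> k _; rewrite lee_fin AB.
rewrite add0n eseries0 ?adde0; last first.
  by move=> k hk _; rewrite AB onth_default.
rewrite sumEFin; congr (_%:E); symmetry.
rewrite (eq_bigr (fun k => G (nth None (map Some e) k))); last first.
  by move=> k _; rewrite AB onthE.
transitivity (\sum_(o <- map Some e) G o); first by rewrite (big_nth None) size_map.
rewrite big_map.
by rewrite /e big_filter big_enum_cond /=.
Qed.

Section LLsec.
Variables (R : realType) (d : nat).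
Implicit Types f g : 'cV[R]_d -> R.

Definition LL f := forall r : R, exists M L : R, 0 <= M /\ 0 <= L /\
  forall (x y : 'cV[R]_d) h, 0 <= h -> (forall i, `|x i ord0| <= r) -> (forall i, `|y i ord0| <= r) ->
  (forall i, `|x i ord0 - y i ord0| <= h) -> `|f x| <= M /\ `|f x - f y| <= L * h.

Lemma LL_cst k : LL (fun _ => k).
Proof.
move=> r; exists `|k|, 0; split => //; split => // x y h h0 _ _ _.
by rewrite subrr normr0 mul0r.
Qed.

Lemma LL_coord i : LL (fun x => x i ord0).
Proof.
move=> r; exists (Num.max r 0), 1; split; first by rewrite le_max lexx orbT.
split => // x y h h0 hx hy hxy; split; last by rewrite mul1r.
by rewrite le_max hx.
Qed.

Lemma LL_add f g : LL f -> LL g -> LL (fun x => f x + g x).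
Proof.
move=> Hf Hg r; case: (Hf r) => M1 [L1 [M10 [L10 H1]]].
case: (Hg r) => M2 [L2 [M20 [L20 H2]]].
exists (M1 + M2), (L1 + L2); split; first exact: addr_ge0.
split; first exact: addr_ge0.
move=> x y h h0 hx hy hxy.
case: (H1 x y h h0 hx hy hxy) => a1 b1; case: (H2 x y h h0 hx hy hxy) => a2 b2.
split; first by apply: le_trans (ler_normD _ _) _; exact: lerD.
have -> : f x + g x - (f y + g y) = (f x - f y) + (g x - g y) by ring.
apply: le_trans (ler_normD _ _) _; rewrite mulrDl; exact: lerD.
Qed.

Lemma LL_opp f : LL f -> LL (fun x => - f x).
Proof.
move=> Hf r; case: (Hf r) => M [L [M0 [L0 H]]]; exists M, L; do 2!split => //.
move=> x y h h0 hx hy hxy; case: (H x y h h0 hx hy hxy) => a b.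
by rewrite normrN -opprD normrN.
Qed.

Lemma LL_mul f g : LL f -> LL g -> LL (fun x => f x * g x).
Proof.
move=> Hf Hg r; case: (Hf r) => M1 [L1 [M10 [L10 H1]]].
case: (Hg r) => M2 [L2 [M20 [L20 H2]]].
exists (M1 * M2), (M1 * L2 + M2 * L1); split; first exact: mulr_ge0.
split; first by apply: addr_ge0; exact: mulr_ge0.
move=> x y h h0 hx hy hxy.
case: (H1 x y h h0 hx hy hxy) => a1 b1; case: (H2 x y h h0 hx hy hxy) => a2 b2.
have hyy : forall i, `|y i ord0 - y i ord0| <= h by move=> i; rewrite subrr normr0.
case: (H2 y y h h0 hy hy hyy) => a2' _.
split; first by rewrite normrM; apply: ler_pM.
have -> : f x * g x - f y * g y = f x * (g x - g y) + g y * (f x - f y) by ring.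
apply: le_trans (ler_normD _ _) _; rewrite !normrM mulrDl -!mulrA.
by apply: lerD; apply: ler_pM.
Qed.

Lemma LL_sum (I : Type) (s : seq I) (P : pred I) (F : I -> 'cV[R]_d -> R) :
  (forall i, P i -> LL (F i)) -> LL (fun x => \sum_(i <- s | P i) F i x).
Proof.
move=> H; elim: s => [|i s IH].
  under [fun x => _]funext => x do rewrite big_nil.
  exact: LL_cst.
case Pi: (P i).
  under [fun x => _]funext => x do rewrite big_cons Pi.
  by apply: LL_add => //; exact: H.
by under [fun x => _]funext => x do rewrite big_cons Pi.
Qed.

Lemma LL_ext f g : f =1 g -> LL f -> LL g.
Proof. by move=> /funext ->. Qed.

End LLsec.
Arguments LL {R d}.

Lemma LL_Mv (R : realType) d k (M : 'M[R]_(k, d))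
   i : LL (fun x => (M *m x) i ord0).
Proof.
apply: (@LL_ext _ _ (fun x => \sum_(j <- index_enum 'I_d | true) M i j * x j ord0)).
  by move=> x; rewrite mxE.
apply: LL_sum => j _; apply: LL_mul; [exact: LL_cst | exact: LL_coord].
Qed.

Lemma LL_dotv (R : realType) d k (F G : 'cV[R]_d -> 'cV[R]_k) :
  (forall i, LL (fun x => F x i ord0)) -> (forall i, LL (fun x => G x i ord0)) ->
  LL (fun x => dotv (F x) (G x)).
Proof.
move=> HF HG; rewrite /dotv.
apply: (@LL_sum _ _ _ (index_enum 'I_k) xpredT (fun i x => F x i ord0 * G x i ord0)).
by move=> i _; apply: LL_mul.
Qed.

Lemma dd5 (R : fieldType) (c a3 a2 a1 a0 t0 t1 t2 t3 t4 : R) :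
  t0 - t1 != 0 -> t0 - t2 != 0 -> t0 - t3 != 0 -> t0 - t4 != 0 ->
  t1 - t2 != 0 -> t1 - t3 != 0 -> t1 - t4 != 0 ->
  t2 - t3 != 0 -> t2 - t4 != 0 -> t3 - t4 != 0 ->
  let f t := c * t ^+ 4 + a3 * t ^+ 3 + a2 * t ^+ 2 + a1 * t + a0 in
  c = f t0 / ((t0 - t1) * (t0 - t2) * (t0 - t3) * (t0 - t4))
    + f t1 / ((t1 - t0) * (t1 - t2) * (t1 - t3) * (t1 - t4))
    + f t2 / ((t2 - t0) * (t2 - t1) * (t2 - t3) * (t2 - t4))
    + f t3 / ((t3 - t0) * (t3 - t1) * (t3 - t2) * (t3 - t4))
    + f t4 / ((t4 - t0) * (t4 - t1) * (t4 - t2) * (t4 - t3)).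
Proof.
move=> h01 h02 h03 h04 h12 h13 h14 h23 h24 h34 f; rewrite /f.
have h10 : t1 - t0 != 0 by rewrite -opprB oppr_eq0.
have h20 : t2 - t0 != 0 by rewrite -opprB oppr_eq0.
have h30 : t3 - t0 != 0 by rewrite -opprB oppr_eq0.
have h40 : t4 - t0 != 0 by rewrite -opprB oppr_eq0.
have h21 : t2 - t1 != 0 by rewrite -opprB oppr_eq0.
have h31 : t3 - t1 != 0 by rewrite -opprB oppr_eq0.
have h41 : t4 - t1 != 0 by rewrite -opprB oppr_eq0.
have h32 : t3 - t2 != 0 by rewrite -opprB oppr_eq0.
have h42 : t4 - t2 != 0 by rewrite -opprB oppr_eq0.
have h43 : t4 - t3 != 0 by rewrite -opprB oppr_eq0.
field.
by rewrite h43 h42 h41 h40 h34 h32 h31 h30 h24 h23 h21 h20 h14 h13 h12 h10 h04 h03 h02 h01.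
Qed.

Lemma term_bd (R : realFieldType) (x D e q : R) :
  `|x| <= e -> 0 < q -> q <= `|D| -> `|x / D| <= e / q.
Proof.
move=> hx q0 qD.
have D0 : 0 < `|D| by apply: lt_le_trans qD.
rewrite normrM normfV; apply: ler_pM; [exact: normr_ge0 | by rewrite invr_ge0 | exact: hx |].
by rewrite lef_pV2 ?posrE.
Qed.

Lemma prod4_bd (R : realFieldType) (a b c d q : R) : 0 < q ->
  q <= `|a| -> q <= `|b| -> q <= `|c| -> q <= `|d| -> q ^+ 4 <= `|a * b * c * d|.
Proof.
move=> q0 ha hb hc hd; rewrite !normrM.
have q0' := ltW q0.
rewrite (_ : q ^+ 4 = q * q * q * q); last by rewrite !exprS expr0 mulr1 !mulrA.
have q2 : 0 <= q * q by exact: mulr_ge0.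
have q3 : 0 <= q * q * q by exact: mulr_ge0.
apply: ler_pM => //; apply: ler_pM => //; apply: ler_pM => //.
Qed.

Lemma dd5_bound (R : realFieldType) (c a3 a2 a1 a0 t0 t1 t2 t3 t4 q e : R) :
  0 < q -> t0 + q <= t1 -> t1 + q <= t2 -> t2 + q <= t3 -> t3 + q <= t4 ->
  let f t := c * t ^+ 4 + a3 * t ^+ 3 + a2 * t ^+ 2 + a1 * t + a0 in
  `|f t0| <= e -> `|f t1| <= e -> `|f t2| <= e -> `|f t3| <= e -> `|f t4| <= e ->
  `|c| <= 5%:R * (e / q ^+ 4).
Proof.
move=> q0 h1 h2 h3 h4 f e0 e1 e2 e3 e4.
have nz (x y : R) : x + q <= y -> (x - y != 0) * (q <= `|x - y|) * (q <= `|y - x|).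
  move=> hxy; have hq : q <= y - x by lra.
  have ge : q <= `|y - x| by apply: le_trans hq (ler_norm _).
  split; [split|] => //.
    by rewrite subr_eq0; apply/eqP => exy; rewrite exy in hxy; lra.
  by rewrite distrC.
have [[n01 a01] b01] := nz _ _ h1.
have [[n12 a12] b12] := nz _ _ h2.
have [[n23 a23] b23] := nz _ _ h3.
have [[n34 a34] b34] := nz _ _ h4.
have [[n02 a02] b02] := nz t0 t2 ltac:(lra).
have [[n03 a03] b03] := nz t0 t3 ltac:(lra).
have [[n04 a04] b04] := nz t0 t4 ltac:(lra).
have [[n13 a13] b13] := nz t1 t3 ltac:(lra).
have [[n14 a14] b14] := nz t1 t4 ltac:(lra).
have [[n24 a24] b24] := nz t2 t4 ltac:(lra).
have q4 : 0 < q ^+ 4 by rewrite exprn_gt0.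
rewrite (@dd5 R c a3 a2 a1 a0 t0 t1 t2 t3 t4 n01 n02 n03 n04 n12 n13 n14 n23 n24 n34) -/f.
rewrite (_ : 5%:R * (e / q ^+ 4) = e / q ^+ 4 + e / q ^+ 4 + e / q ^+ 4 + e / q ^+ 4 + e / q ^+ 4); last first.
  by rewrite (_ : 5%N = (1+1+1+1+1)%N) // !natrD !mulrDl mul1r.
do 4! (apply: le_trans (ler_normD _ _) _; apply: lerD;
  last by apply: term_bd => //; apply: prod4_bd).
by apply: term_bd => //; apply: prod4_bd.
Qed.

Section Cover.
Variables (R : realType) (d' : nat) (j : 'I_d'.+1) (u : 'cV[R]_d'.+1).
Hypothesis uj : u j ord0 = 1.

Definition Ub : R := 1 + \sum_i `|u i ord0|.

Lemma u_le i : `|u i ord0| <= Ub - 1.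
Proof.
rewrite /Ub (addrC 1) addrK (bigD1 i) //= lerDl; apply: sumr_ge0 => k _; exact: normr_ge0.
Qed.

Lemma Ub_ge1 : 1 <= Ub.
Proof. by rewrite /Ub lerDl; apply: sumr_ge0 => k _; exact: normr_ge0. Qed.

Definition sc (x : 'cV[R]_d'.+1) (i : 'I_d'.+1) :=
  if i == j then x j ord0 else x i ord0 - x j ord0 * u i ord0.

Lemma sc_bd (x : 'cV[R]_d'.+1) (i : 'I_d'.+1) : (forall k, `|x k ord0| <= 1) -> `|sc x i| <= Ub.
Proof.
move=> hx; rewrite /sc; case: ifP => _.
  by apply: le_trans (hx j) Ub_ge1.
have h1 := hx i; have h2 := hx j; have h3 := u_le i.
have h4 : `|x j ord0 * u i ord0| <= Ub - 1.
  rewrite normrM -[Ub - 1]mul1r; apply: ler_pM => //.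
apply: le_trans (ler_normB _ _) _; lra.
Qed.

Variables (V N : nat).
Hypothesis hV : 1 + Ub <= V%:R.
Hypothesis hN : (0 < N)%N.
Let K2 := (2 * V * N).+1.
Let I := ({ffun 'I_d' -> 'I_K2} * 'I_K2)%type.

Definition kv (x : 'cV[R]_d'.+1) (i : 'I_d'.+1) := Num.truncn ((sc x i + V%:R) * N%:R).

Lemma kv_lt (x : 'cV[R]_d'.+1) (i : 'I_d'.+1) : (forall k, `|x k ord0| <= 1) -> (kv x i < K2)%N.
Proof.
move=> hx; rewrite /kv /K2 ltnS.
have hV' : 1 + Ub <= V%:R :> R by [].
have := sc_bd x i hx; rewrite ler_norml => /andP[h1 h2].
have N0 : (0 : R) < N%:R by rewrite ltr0n.
have h : (sc x i + V%:R) * N%:R <= (2 * V * N)%:R.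
  rewrite natrM natrM; apply: ler_pM => //; try lra.
have h0 : 0 <= (sc x i + V%:R) * N%:R by apply: mulr_ge0; lra.
have := truncn_itv h0 => /andP[a _].
by rewrite -(ler_nat R); apply: le_trans a h.
Qed.

Definition idx (x : 'cV[R]_d'.+1) : I := ([ffun i' => inord (kv x (lift j i'))], inord (kv x j)).

Definition kval (k : I) i : nat := if unlift j i is Some i' then k.1 i' else k.2.

Lemma kval_idx (x : 'cV[R]_d'.+1) (i : 'I_d'.+1) : (forall k, `|x k ord0| <= 1) -> kval (idx x) i = kv x i.
Proof.
move=> hx; rewrite /kval /idx; case: unliftP => [i' ->|->] /=.
  by rewrite ffunE inordK // kv_lt.
by rewrite inordK // kv_lt.
Qed.

Definition zv (k : I) i : R := (kval k i)%:R / N%:R - V%:R.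

Lemma zv_idx (x : 'cV[R]_d'.+1) (i : 'I_d'.+1) : (forall k, `|x k ord0| <= 1) ->
  zv (idx x) i <= sc x i <= zv (idx x) i + N%:R^-1.
Proof.
move=> hx; rewrite /zv kval_idx // /kv.
have hV' : 1 + Ub <= V%:R :> R by [].
have := sc_bd x i hx; rewrite ler_norml => /andP[h1 h2].
have N0 : (0 : R) < N%:R by rewrite ltr0n.
have h0 : 0 <= (sc x i + V%:R) * N%:R by apply: mulr_ge0; lra.
have := truncn_itv h0 => /andP[a b].
set T := Num.truncn _ in a b *.
rewrite -natr1 in b.
have a' : T%:R / N%:R <= sc x i + V%:R by rewrite ler_pdivrMr.
have b' : sc x i + V%:R <= T%:R / N%:R + N%:R^-1.
  rewrite (_ : T%:R / N%:R + N%:R^-1 = (T%:R + 1) / N%:R); last by rewrite mulrDl mul1r.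
  rewrite ler_pdivlMr //; exact: ltW.
apply/andP; split; lra.
Qed.

Definition ba (k : I) i := (if i == j then 0 else zv k i) + u i ord0 * zv k j - Ub / N%:R.
Definition bb (k : I) i := ba k i + (1 + 2 * Ub) / N%:R.

Lemma in_box (x : 'cV[R]_d'.+1) : (forall k, `|x k ord0| <= 1) -> box (ba (idx x)) (bb (idx x)) x.
Proof.
move=> hx i; rewrite /bb /ba.
have N0 : (0 : R) < N%:R by rewrite ltr0n.
have hj := zv_idx x j hx; rewrite /sc eqxx in hj.
set z2 := zv (idx x) j in hj *.
have hu := u_le i.
have hm : `|u i ord0 * (x j ord0 - z2)| <= Ub / N%:R.
  rewrite normrM; apply: ler_pM => //; first lra.
  rewrite ger0_norm; lra.
move: hm; rewrite ler_norml => /andP[m1 m2].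
have e1 : (1 + 2 * Ub) / N%:R = N%:R^-1 + Ub / N%:R + Ub / N%:R.
  by ring.
rewrite e1.
case: ifP => ij.
  move/eqP: ij => ij; subst i.
  have UN : 0 <= Ub / N%:R by apply: divr_ge0; [have := Ub_ge1; lra | exact: ltW].
  rewrite uj mul1r; apply/andP; split; lra.
have hi := zv_idx x i hx; rewrite /sc ij in hi.
set z1 := zv (idx x) i in hi *.
have ex : u i ord0 * (x j ord0 - z2) = x j ord0 * u i ord0 - u i ord0 * z2 by ring.
rewrite ex in m1 m2.
have UN : 0 <= Ub / N%:R by apply: divr_ge0; [have := Ub_ge1; lra | exact: ltW].
apply/andP; split; lra.
Qed.


Variables (P : 'cV[R]_d'.+1 -> R) (c : R) (a3 a2 a1 a0 : 'cV[R]_d'.+1 -> R) (L : R).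
Hypothesis Pexp : forall y t, P (y + t *: u) =
  c * t ^+ 4 + a3 y * t ^+ 3 + a2 y * t ^+ 2 + a1 y * t + a0 y.
Hypothesis HL : forall x z : 'cV[R]_d'.+1, (forall i, `|x i ord0| <= 1) ->
  (forall i, `|z i ord0| <= 2 + 2 * Ub) -> (forall i, `|x i ord0 - z i ord0| <= N%:R^-1) ->
  P x = 0 -> `|P z| <= L / N%:R.

Definition Sset := [set x : 'cV[R]_d'.+1 | P x = 0 /\ forall i, `|x i ord0| <= 1].
Definition sel (k : I) : bool := `[< exists x, Sset x /\ idx x = k >].

Definition y0 (c0 : {ffun 'I_d' -> 'I_K2}) : 'cV[R]_d'.+1 :=
  \col_i (if unlift j i is Some i' then (c0 i' : nat)%:R / N%:R - V%:R else 0).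

Definition fq (c0 : {ffun 'I_d' -> 'I_K2}) (t : R) :=
  c * t ^+ 4 + a3 (y0 c0) * t ^+ 3 + a2 (y0 c0) * t ^+ 2 + a1 (y0 c0) * t + a0 (y0 c0).

Lemma pt_bound c0 (s : 'I_K2) (x : 'cV[R]_d'.+1) : Sset x -> idx x = (c0, s) ->
  (s%:R / N%:R - V%:R <= x j ord0 <= s%:R / N%:R - V%:R + N%:R^-1) /\
  `|fq c0 (x j ord0)| <= L / N%:R.
Proof.
move=> [Px hx] e.
have N0 : (0 : R) < N%:R by rewrite ltr0n.
have N1 : N%:R^-1 <= (1 : R) by rewrite invr_le1 // ?ler1n // unitfE gt_eqF.
have kj : kval (idx x) j = s by rewrite e /kval unlift_none.
split.
  by have := zv_idx x j hx; rewrite /zv kj /sc eqxx.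
set t := x j ord0.
have ht : `|t| <= 1 := hx j.
rewrite /fq -Pexp; apply: (HL x (y0 c0 + t *: u) hx _ _ Px) => i; rewrite !mxE.
  case: unliftP => [i' ->|->]; last first.
    by rewrite add0r uj mulr1; apply: le_trans ht _; have := Ub_ge1; lra.
  have := zv_idx x (lift j i') hx.
  have -> : zv (idx x) (lift j i') = (c0 i' : nat)%:R / N%:R - V%:R.
    by rewrite /zv /kval liftK e.
  have := sc_bd x (lift j i') hx; have := u_le (lift j i').
  have hv : `|t * u (lift j i') ord0| <= Ub - 1.
    rewrite normrM -[Ub - 1]mul1r; apply: ler_pM => //; exact: u_le.
  move: hv; rewrite !ler_norml => /andP[v1 v2] _ /andP[s1 s2] /andP[z1 z2].
  have := Ub_ge1 => U1.
  apply/andP; split; lra.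
case: unliftP => [i' ->|->]; last first.
  by rewrite add0r uj mulr1 subrr normr0 invr_ge0 ler0n.
have := zv_idx x (lift j i') hx.
have -> : zv (idx x) (lift j i') = (c0 i' : nat)%:R / N%:R - V%:R.
  by rewrite /zv /kval liftK e.
rewrite /sc eq_sym (negbTE (neq_lift j i')) => /andP[z1 z2].
rewrite -/t in z1 z2; rewrite ler_norml; apply/andP; split; lra.
Qed.


Lemma gapR (g a b : nat) : (a + g <= b)%N ->
  a%:R / N%:R + g%:R / N%:R <= b%:R / N%:R :> R.
Proof.
move=> h; rewrite -mulrDl -natrD; apply: ler_wpM2r; first by rewrite invr_ge0 ler0n.
by rewrite ler_nat.
Qed.

Lemma col_bound c0 (g : nat) : (1 < g)%N ->
  5%:R * ((L / N%:R) / ((g%:R - 1) / N%:R) ^+ 4) < `|c| ->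
  (\sum_(s : 'I_K2) sel (c0, s) <= 4 * g)%N.
Proof.
move=> g1 Hq.
pose p := fun s : nat => sel (c0, inord s).
rewrite (eq_bigr (fun s : 'I_K2 => (p s : nat))); last by move=> s _; rewrite /p inord_val.
rewrite -(big_mkord xpredT (fun s => (p s : nat))).
apply: (@chain_count p g K2 _ K2 4 0); first by apply: leq_trans g1.
  by rewrite subn0.
have getp (s : nat) : (s < K2)%N -> p s -> exists x, Sset x /\ idx x = (c0, inord s).
  by move=> _ /asboolP.
have N0 : (0 : R) < N%:R by rewrite ltr0n.
have pb (s : nat) : (s < K2)%N -> p s ->
   exists t, (s%:R / N%:R - V%:R <= t <= s%:R / N%:R - V%:R + N%:R^-1) /\
   `|fq c0 t| <= L / N%:R.
  move=> sK ps; case: (getp s sK ps) => x [Sx ex].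
  have := @pt_bound c0 (inord s) x Sx ex; rewrite inordK //; move=> [h1 h2].
  by exists (x j ord0).
move=> [s0 [/andP[_ l0] [p0 [s1 [/andP[g01 l1] [p1 [s2 [/andP[g12 l2] [p2
  [s3 [/andP[g23 l3] [p3 [s4 [/andP[g34 l4] [p4 _]]]]]]]]]]]]]]].
case: (pb _ l0 p0) => t0 [/andP[u0 v0] w0].
case: (pb _ l1 p1) => t1 [/andP[u1 v1] w1].
case: (pb _ l2 p2) => t2 [/andP[u2 v2] w2].
case: (pb _ l3 p3) => t3 [/andP[u3 v3] w3].
case: (pb _ l4 p4) => t4 [/andP[u4 v4] w4].
have G01 := @gapR g _ _ g01; have G12 := @gapR g _ _ g12; have G23 := @gapR g _ _ g23; have G34 := @gapR g _ _ g34.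
have qE : (g%:R - 1) / N%:R = g%:R / N%:R - N%:R^-1 :> R by rewrite mulrBl mul1r.
have g1R : 1 < g%:R :> R by rewrite ltr1n.
have q0 : 0 < (g%:R - 1) / N%:R :> R by apply: divr_gt0 => //; lra.
have := @dd5_bound R c (a3 (y0 c0)) (a2 (y0 c0)) (a1 (y0 c0)) (a0 (y0 c0)) t0 t1 t2 t3 t4
  ((g%:R - 1) / N%:R) (L / N%:R) q0.
rewrite qE in q0 *.
move=> H; have := H ltac:(lra) ltac:(lra) ltac:(lra) ltac:(lra) w0 w1 w2 w3 w4.
rewrite -qE; move=> Hc.
by have := lt_le_trans Hq Hc; rewrite ltxx.
Qed.


Lemma cover_bound (g : nat) : (1 < g)%N ->
  5%:R * ((L / N%:R) / ((g%:R - 1) / N%:R) ^+ 4) < `|c| ->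
  (leb_outer Sset <= ((K2 ^ d' * (4 * g))%:R * ((1 + 2 * Ub) / N%:R) ^+ d'.+1)%:E)%E.
Proof.
move=> g1 Hq.
have N0 : (0 : R) < N%:R by rewrite ltr0n.
set W := (1 + 2 * Ub) / N%:R.
have W0 : 0 <= W by apply: divr_ge0; [have := Ub_ge1; lra | exact: ltW].
apply: le_trans (@leb_outer_fin R d' I sel ba bb Sset _) _.
  move=> x Sx; exists (idx x); first by apply/asboolP; exists x.
  by apply: in_box; case: Sx.
rewrite lee_fin.
have bv k : box_vol (ba k) (bb k) = W ^+ d'.+1.
  rewrite /box_vol (eq_bigr (fun _ => W)); last first.
    by move=> i _; rewrite /bb addrAC subrr add0r; apply/max_idPl.
  by rewrite prodr_const card_ord.
rewrite (eq_bigr (fun _ => W ^+ d'.+1)); last by move=> k _; rewrite bv.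
rewrite big_mkcond /=.
rewrite (eq_bigr (fun k => (sel k : nat)%:R * W ^+ d'.+1)); last first.
  by move=> k _; case: (sel k); rewrite ?mul1r ?mul0r.
rewrite -mulr_suml -natr_sum; apply: ler_wpM2r; first exact: exprn_ge0.
rewrite ler_nat.
rewrite (eq_bigr (fun k : I => (sel (k.1, k.2) : nat))); last by move=> [].
rewrite -(pair_bigA _ (fun a b => (sel (a, b) : nat))) /=.
apply: (@leq_trans (\sum_(c0 : {ffun 'I_d' -> 'I_K2}) 4 * g)%N).
  by apply: leq_sum => c0 _; apply: col_bound.
by rewrite sum_nat_const card_ffun !card_ord.
Qed.

End Cover.

Lemma leb_outer_ge0 (R : realType) d (S : set 'cV[R]_d) : (0 <= leb_outer S)%E.
Proof.
apply/ereal_infP => y [a [b [_ ->]]]; apply: nneseries_ge0 => k _ _.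
rewrite lee_fin /box_vol; apply: prodr_ge0 => i _; by rewrite le_max lexx orbT.
Qed.

Lemma leb_outer_small (R : realType) d (S : set 'cV[R]_d) (C : R) :
  (forall n : nat, (0 < n)%N -> (leb_outer S <= (C / n%:R)%:E)%E) -> leb_outer S = 0.
Proof.
move=> H; apply/eqP; rewrite eq_le leb_outer_ge0 andbT.
have := H 1%N isT; case E: (leb_outer S) => [r| |] //= h1.
rewrite lee_fin; apply/negPn/negP; rewrite -ltNge => r0.
have C0 : 0 <= C by move: h1; rewrite lee_fin divr1 => h; apply: le_trans (ltW r0) h.
set n := (Num.truncn (C / r)).+1.
have hn := truncnS_gt (C / r); rewrite -/n in hn.
have := H n isT; rewrite E lee_fin => h.
have n0 : (0 : R) < n%:R by rewrite ltr0n.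
move: h; rewrite ler_pdivlMr // => h.
move: hn; rewrite ltr_pdivrMr // => hn.
have : r * n%:R < r * n%:R by apply: le_lt_trans h _; rewrite mulrC.
by rewrite ltxx.
Qed.

Lemma powle (R : realFieldType) (x y : R) k : 0 <= x -> x <= y -> x ^+ k <= y ^+ k.
Proof. move=> x0 xy; elim: k => [|k IH]; first by rewrite !expr0.
rewrite !exprS; apply: ler_pM => //; exact: exprn_ge0. Qed.

Lemma null_set (R : realType) d' (P : 'cV[R]_d'.+1 -> R) (j : 'I_d'.+1)
  (u : 'cV[R]_d'.+1) (c : R) (a3 a2 a1 a0 : 'cV[R]_d'.+1 -> R) :
  LL P -> u j ord0 = 1 -> c != 0 ->
  (forall y t, P (y + t *: u) =
     c * t ^+ 4 + a3 y * t ^+ 3 + a2 y * t ^+ 2 + a1 y * t + a0 y) ->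
  leb_outer (Sset R d' P) = 0.
Proof.
move=> HLL uj c0 Pexp.
set U := Ub R d' u.
have U1 : 1 <= U := Ub_ge1 _ _ _.
set V := (Num.truncn (1 + U)).+1.
have hV : 1 + U <= V%:R by apply: ltW; exact: truncnS_gt.
have V1 : 1 <= V%:R :> R by lra.
case: (HLL (2 + 2 * U)) => M [L [M0 [L0 HP]]].
have cpos : 0 < `|c| by rewrite normr_gt0.
set Qn := (Num.truncn (5 * L / `|c|)).+1.
have hQ : 5 * L / `|c| < Qn%:R by exact: truncnS_gt.
have Q1 : 1 <= Qn%:R :> R by rewrite ler1n.
pose C := (3 * V%:R) ^+ d' * (4 * (Qn%:R + 2)) * (2 * V%:R) ^+ d'.+1 : R.
apply: (@leb_outer_small R d'.+1 _ C) => n n0.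
have nR0 : (0 : R) < n%:R by rewrite ltr0n.
set N := (n ^ 4)%N.
have N0 : (0 < N)%N by rewrite expn_gt0 n0.
have NR : N%:R = n%:R ^+ 4 :> R by rewrite natrX.
have NR0 : (0 : R) < N%:R by rewrite ltr0n.
set g := (Qn * n ^ 3 + 2)%N.
have HL : forall x z : 'cV[R]_d'.+1, (forall i, `|x i ord0| <= 1) ->
  (forall i, `|z i ord0| <= 2 + 2 * U) -> (forall i, `|x i ord0 - z i ord0| <= N%:R^-1) ->
  P x = 0 -> `|P z| <= L / N%:R.
  move=> x z hx hz hxz Px.
  have hx' : forall i, `|x i ord0| <= 2 + 2 * U by move=> i; apply: le_trans (hx i) _; lra.
  have := HP x z N%:R^-1 _ hx' hz hxz; rewrite invr_ge0 ler0n => /(_ isT) [_].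
  by rewrite Px sub0r normrN.
have Hq : 5%:R * ((L / N%:R) / ((g%:R - 1) / N%:R) ^+ 4) < `|c|.
  have gE : g%:R - 1 = Qn%:R * n%:R ^+ 3 + 1 :> R.
    by rewrite /g natrD natrM natrX; ring.
  set a := Qn%:R * n%:R ^+ 3 : R.
  have a0' : 0 < a by apply: mulr_gt0; [lra | exact: exprn_gt0].
  have qa : a / N%:R <= (g%:R - 1) / N%:R.
    by rewrite gE -/a; apply: ler_wpM2r; [rewrite invr_ge0; exact: ltW | lra].
  have q4 : (a / N%:R) ^+ 4 <= ((g%:R - 1) / N%:R) ^+ 4.
    by apply: powle => //; apply: divr_ge0; exact: ltW.
  have aE : (a / N%:R) ^+ 4 * N%:R = Qn%:R ^+ 4.
    rewrite /a NR; field; exact: lt0r_neq0.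
  have QQ : Qn%:R <= Qn%:R ^+ 4 :> R.
    rewrite exprS -[X in X <= _]mulr1; apply: ler_wpM2l; [lra | exact: exprn_ege1].
  have pos4 : 0 < (a / N%:R) ^+ 4 by apply: exprn_gt0; apply: divr_gt0.
  have e1 : L / N%:R / ((g%:R - 1) / N%:R) ^+ 4 <= L / Qn%:R.
    rewrite -mulrA -invfM; apply: ler_wpM2l => //.
    rewrite lef_pV2 ?posrE; last by lra.
      apply: le_trans QQ _; rewrite -aE mulrC; apply: ler_wpM2l; [exact: ltW|exact: q4].
    apply: mulr_gt0 => //; apply: lt_le_trans pos4 q4.
  apply: le_lt_trans (ler_wpM2l _ e1) _; first by rewrite ler0n.
  move: hQ; rewrite ltr_pdivrMr // => hQ.
  rewrite mulrA ltr_pdivrMr; last by lra.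
  by rewrite [_ * Qn%:R]mulrC.
apply: le_trans (@cover_bound R d' j u uj V N hV N0 P c a3 a2 a1 a0 L Pexp HL g _ Hq) _; first by rewrite /g addn2.
rewrite lee_fin.
have V1' : (1 <= V)%N by [].
have VN1 : 1 <= V%:R * N%:R :> R by rewrite -natrM ler1n muln_gt0 V1'.
have n3 : 1 <= n%:R ^+ 3 :> R by apply: exprn_ege1; rewrite ler1n.
have K : (((2 * V * N).+1 ^ d')%:R : R) <= (3 * V%:R * N%:R) ^+ d'.
  rewrite natrX; apply: powle => //.
  rewrite -natr1 (natrM _ (2 * V) N) (natrM _ 2 V); lra.
have G : ((4 * g)%:R : R) <= 4 * (Qn%:R + 2) * n%:R ^+ 3.
  rewrite /g natrM natrD natrM natrX.
  have : 2 <= 2 * n%:R ^+ 3 :> R by lra.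
  have : 0 <= Qn%:R * n%:R ^+ 3 :> R by apply: mulr_ge0; lra.
  move=> h1 h2; rewrite mulrDr mulrDl; lra.
have Wb : ((1 + 2 * U) / N%:R) ^+ d'.+1 <= (2 * V%:R / N%:R) ^+ d'.+1.
  apply: powle; first by apply: divr_ge0; [lra | exact: ltW].
  apply: ler_wpM2r; [rewrite invr_ge0; exact: ltW | lra].
rewrite natrM.
apply: le_trans (_ : (3 * V%:R * N%:R) ^+ d' * (4 * (Qn%:R + 2) * n%:R ^+ 3) *
   (2 * V%:R / N%:R) ^+ d'.+1 <= _).
  apply: ler_pM; rewrite -/U; [by apply: mulr_ge0 | by apply: exprn_ge0; apply: divr_ge0; [lra | exact: ltW] | | exact: Wb].
  by apply: ler_pM.
rewrite /C exprMn expr_div_n (exprS (N%:R : R) d').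
set X := N%:R ^+ d'.
have X0 : X != 0 by rewrite expf_neq0 // lt0r_neq0.
rewrite NR le_eqVlt; apply/orP; left; apply/eqP.
have n0' : n%:R != 0 :> R by exact: lt0r_neq0.
by field; rewrite X0 n0'.
Qed.

Lemma mul_self_ge0 (R : realDomainType) (x : R) : 0 <= x * x.
Proof. by rewrite -expr2 sqr_ge0. Qed.

Section Dot.
Variables (R : realType) (n : nat).
Implicit Types w z : 'cV[R]_n.

Lemma dotvC w z : dotv w z = dotv z w.
Proof. by apply: eq_bigr => i _; rewrite mulrC. Qed.

Lemma dotvDr w z1 z2 : dotv w (z1 + z2) = dotv w z1 + dotv w z2.
Proof. by rewrite /dotv -big_split; apply: eq_bigr => i _; rewrite mxE mulrDr. Qed.

Lemma dotvZr w (t : R) z : dotv w (t *: z) = t * dotv w z.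
Proof. by rewrite /dotv mulr_sumr; apply: eq_bigr => i _; rewrite mxE mulrCA. Qed.

Lemma dotvDl w1 w2 z : dotv (w1 + w2) z = dotv w1 z + dotv w2 z.
Proof. by rewrite dotvC dotvDr !(dotvC z). Qed.

Lemma dotvZl (t : R) w z : dotv (t *: w) z = t * dotv w z.
Proof. by rewrite dotvC dotvZr dotvC. Qed.

Lemma dotvBr w z1 z2 : dotv w (z1 - z2) = dotv w z1 - dotv w z2.
Proof. by rewrite dotvDr -scaleN1r dotvZr mulN1r. Qed.

Lemma dotvBl w1 w2 z : dotv (w1 - w2) z = dotv w1 z - dotv w2 z.
Proof. by rewrite dotvC dotvBr !(dotvC z). Qed.

Lemma dotvE w z : dotv w z = (w^T *m z) ord0 ord0.
Proof. by rewrite mxE; apply: eq_bigr => i _; rewrite mxE. Qed.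

Lemma sqnorm_ge0 w : 0 <= sqnorm w.
Proof. by apply: sumr_ge0 => i _; exact: mul_self_ge0. Qed.

Lemma sqnorm_eq0 w : sqnorm w = 0 -> w = 0.
Proof.
move=> h; apply/matrixP => i k; rewrite (ord1 k) mxE.
have H0 : forall k : 'I_n, xpredT k -> 0 <= w k ord0 * w k ord0.
  by move=> k' _; exact: mul_self_ge0.
have := @psumr_eq0P R _ xpredT (fun i => w i ord0 * w i ord0) H0 h i isT.
by move/eqP; rewrite mulf_eq0 orbb => /eqP.
Qed.

Lemma sqnorm_gt0 w : w != 0 -> 0 < sqnorm w.
Proof.
move=> w0; rewrite lt_neqAle sqnorm_ge0 andbT eq_sym; apply/eqP => h.
by move/eqP: w0; apply; apply: sqnorm_eq0.
Qed.

Lemma sqnormD w z (t : R) : sqnorm (w + t *: z) = sqnorm w + 2 * t * dotv w z + t ^+ 2 * sqnorm z.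
Proof.
rewrite /sqnorm !dotvDl !dotvDr !dotvZl !dotvZr (dotvC z w); ring.
Qed.

Lemma sqnormZ (t : R) w : sqnorm (t *: w) = t ^+ 2 * sqnorm w.
Proof. by rewrite /sqnorm dotvZl dotvZr mulrA expr2. Qed.

Lemma coord_le1 w i : sqnorm w = 1 -> `|w i ord0| <= 1.
Proof.
move=> h.
have : w i ord0 * w i ord0 <= 1.
  rewrite -h /sqnorm /dotv (bigD1 i) //= lerDl; apply: sumr_ge0 => k _; exact: mul_self_ge0.
move=> h2; have h3 : `|w i ord0| * `|w i ord0| <= 1.
  by rewrite -normrM ger0_norm // mul_self_ge0.
have h4 := normr_ge0 (w i ord0).
nra.
Qed.
End Dot.
Arguments dotvC {R n}.
Arguments dotvDr {R n}.
Arguments dotvZr {R n}.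
Arguments dotvDl {R n}.
Arguments dotvZl {R n}.
Arguments dotvBr {R n}.
Arguments dotvBl {R n}.
Arguments dotvE {R n}.
Arguments sqnorm_ge0 {R n}.
Arguments sqnorm_eq0 {R n}.
Arguments sqnorm_gt0 {R n}.
Arguments sqnormD {R n}.
Arguments sqnormZ {R n}.
Arguments coord_le1 {R n}.

Lemma dotv_adj (R : realType) m d (A : 'M[R]_(m, d)) (w z : 'cV[R]_d) :
  dotv (A *m w) (A *m z) = dotv ((A^T *m A) *m w) z.
Proof. by rewrite !dotvE !trmx_mul trmxK !mulmxA. Qed.

Lemma quart (R : comRingType) (c f0 f1 f2 f3 w0 w1 : R) (G : R -> R) :
  c = f3 * w1 ->
  (forall t, G t = (f0 + f1 * t + f2 * t ^+ 2 + f3 * t ^+ 3) * (w0 + w1 * t)) ->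
  exists b : R * R * R * R, forall t,
    G t = c * t ^+ 4 + b.1.1.1 * t ^+ 3 + b.1.1.2 * t ^+ 2 + b.1.2 * t + b.2.
Proof.
move=> -> H; exists (f3 * w0 + f2 * w1, f2 * w0 + f1 * w1, f1 * w0 + f0 * w1, f0 * w0).
by move=> t; rewrite H /=; ring.
Qed.

Lemma leb_outer_mono (R : realType) d (S T : set 'cV[R]_d) :
  S `<=` T -> (leb_outer S <= leb_outer T)%E.
Proof.
move=> ST; apply: le_ereal_inf => s [a [b [cov ->]]].
by exists a, b; split => //; apply: subset_trans cov.
Qed.

Lemma mulmxZ (R : realType) m d (A : 'M[R]_(m, d)) (t : R) (x : 'cV[R]_d) :
  A *m (t *: x) = t *: (A *m x).
Proof. by rewrite scalemxAr. Qed.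

Theorem mainTheorem12 (R : realType) (m l d : nat)
  (A : 'M[R]_(m, d)) (B : 'M[R]_(l, d)) (v : 'cV[R]_d) :
  (forall x : 'cV[R]_d, B *m x = 0 -> x = 0) ->
  @usphere R d v ->
  ~ gen_eigvec A B v ->
  unif_sphere_as (fun x : 'cV[R]_d =>
    let a := sqnorm (A *m v) in
    let b := dotv (A *m v) (A *m x) in
    let c := sqnorm (A *m x) in
    let dv := sqnorm (B *m v) in
    let e := dotv (B *m v) (B *m x) in
    let fx := sqnorm (B *m x) in
    let alpha := b * dv - a * e in
    let gamma := c * e - b * fx in
    gamma <> 0 /\ alpha <> 0).
Proof.
case: d A B v => [|d'] A B v Bker vS ngen.
  by exfalso; move: vS; rewrite /usphere /= /sqnorm /dotv big_ord0 => /eqP; rewrite eq_sym oner_eq0.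
set Av := A *m v; set Bv := B *m v.
pose a := sqnorm Av; pose dv := sqnorm Bv.
pose gam (x : 'cV[R]_d'.+1) := sqnorm (A *m x) * dotv Bv (B *m x) - dotv Av (A *m x) * sqnorm (B *m x).
pose alp (x : 'cV[R]_d'.+1) := dotv Av (A *m x) * dv - a * dotv Bv (B *m x).
pose P x := gam x * alp x.
have v0 : v != 0.
  apply/eqP => v0; move: vS; rewrite /usphere /= v0 /sqnorm /dotv big1 => [/eqP|i _].
    by rewrite eq_sym oner_eq0.
  by rewrite mxE mul0r.
have Bv0 : Bv != 0 by apply/eqP => /Bker h; move/eqP: v0; apply.
have dvpos : 0 < dv by apply: sqnorm_gt0.
have gamZ t x : gam (t *: x) = t ^+ 3 * gam x.
  by rewrite /gam !mulmxZ !sqnormZ !dotvZr; ring.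
have alpZ t x : alp (t *: x) = t * alp x.
  by rewrite /alp !mulmxZ !dotvZr; ring.
have [x0 [gx0 ax0]] : exists x0, gam x0 != 0 /\ alp x0 != 0.
  pose p := A^T *m A *m v; pose q := B^T *m B *m v.
  have hp x : dotv Av (A *m x) = dotv p x := @dotv_adj R m d'.+1 A v x.
  have hq x : dotv Bv (B *m x) = dotv q x := @dotv_adj R l d'.+1 B v x.
  have q0 : q != 0.
    have e : dv = dotv q v by exact: hq v.
    apply/eqP => q0; move: dvpos; rewrite e q0 /dotv big1 ?ltxx //.
    by move=> i _; rewrite mxE mul0r.
  have sq : 0 < dotv q q by apply: sqnorm_gt0.
  pose mu := dotv p q / dotv q q; pose x0 := p - mu *: q.
  have qx : dotv q x0 = 0.
    rewrite /x0 dotvBr dotvZr (dotvC q p) /mu; field; exact: lt0r_neq0.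
  have x0nz : x0 != 0.
    apply/eqP => h; apply: ngen; split => //; exists mu.
    by apply/eqP; rewrite -subr_eq0; apply/eqP.
  have px : dotv p x0 = sqnorm x0.
    rewrite (_ : p = x0 + mu *: q); last by rewrite /x0 subrK.
    by rewrite dotvDl dotvZl qx mulr0 addr0.
  have Bx0 : B *m x0 != 0 by apply/eqP => /Bker h; move/eqP: x0nz; apply.
  have s1 := sqnorm_gt0 _ x0nz; have s2 := sqnorm_gt0 _ Bx0.
  exists x0; split.
    rewrite /gam hq hp qx px mulr0 sub0r oppr_eq0; apply: mulf_neq0; exact: lt0r_neq0.
  rewrite /alp hp hq qx px mulr0 subr0; apply: mulf_neq0; exact: lt0r_neq0.
have [j xj] : exists j, x0 j ord0 != 0.
  case: (pselect (exists j, x0 j ord0 != 0)) => // nj; exfalso.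
  have : x0 = 0.
    apply/matrixP => i k; rewrite (ord1 k) mxE; apply/eqP; apply: contra_notT nj => h; by exists i.
  by move=> x00; move: gx0; rewrite x00 -(scale0r 0) gamZ expr0n mul0r eqxx.
pose u := (x0 j ord0)^-1 *: x0.
have uj : u j ord0 = 1 by rewrite mxE mulVf.
pose c := gam u * alp u.
have c0 : c != 0.
  by rewrite /c /u gamZ alpZ !mulf_neq0 ?expf_neq0 ?invr_eq0.
have ex : forall y : 'cV[R]_d'.+1, exists b : R * R * R * R, forall t,
    P (y + t *: u) = c * t ^+ 4 + b.1.1.1 * t ^+ 3 + b.1.1.2 * t ^+ 2 + b.1.2 * t + b.2.
  move=> y.
  apply: (@quart _ c
    (sqnorm (A *m y) * dotv Bv (B *m y) - dotv Av (A *m y) * sqnorm (B *m y))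
    (sqnorm (A *m y) * dotv Bv (B *m u) + 2 * dotv (A *m y) (A *m u) * dotv Bv (B *m y)
      - dotv Av (A *m y) * (2 * dotv (B *m y) (B *m u)) - dotv Av (A *m u) * sqnorm (B *m y))
    (2 * dotv (A *m y) (A *m u) * dotv Bv (B *m u) + sqnorm (A *m u) * dotv Bv (B *m y)
      - dotv Av (A *m y) * sqnorm (B *m u) - dotv Av (A *m u) * (2 * dotv (B *m y) (B *m u)))
    (gam u) (alp y) (alp u)) => // t.
  rewrite /P /gam /alp !mulmxDr !mulmxZ !sqnormD !dotvDr !dotvZr; ring.
have [fb Hfb] := choice ex.
have LLP : LL P.
  have LA i := @LL_Mv R d'.+1 m A i.
  have LB i := @LL_Mv R d'.+1 l B i.
  have LsqA : LL (fun x => sqnorm (A *m x)) :=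
    @LL_dotv R d'.+1 m (fun x => A *m x) (fun x => A *m x) LA LA.
  have LsqB : LL (fun x => sqnorm (B *m x)) :=
    @LL_dotv R d'.+1 l (fun x => B *m x) (fun x => B *m x) LB LB.
  have LdA : LL (fun x => dotv Av (A *m x)) :=
    @LL_dotv R d'.+1 m (fun _ => Av) (fun x => A *m x) (fun i => @LL_cst R d'.+1 (Av i ord0)) LA.
  have LdB : LL (fun x => dotv Bv (B *m x)) :=
    @LL_dotv R d'.+1 l (fun _ => Bv) (fun x => B *m x) (fun i => @LL_cst R d'.+1 (Bv i ord0)) LB.
  apply: (@LL_mul R d'.+1 gam alp).
    apply: (@LL_add R d'.+1 (fun x => sqnorm (A *m x) * dotv Bv (B *m x))
       (fun x => - (dotv Av (A *m x) * sqnorm (B *m x)))).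
      exact: LL_mul.
    by apply: LL_opp; apply: LL_mul.
  apply: (@LL_add R d'.+1 (fun x => dotv Av (A *m x) * dv) (fun x => - (a * dotv Bv (B *m x)))).
    by apply: LL_mul => //; exact: LL_cst.
  by apply: LL_opp; apply: LL_mul => //; exact: LL_cst.
have N0 := @null_set R d' P j u c (fun y => (fb y).1.1.1) (fun y => (fb y).1.1.2) (fun y => (fb y).1.2) (fun y => (fb y).2) LLP uj c0 Hfb.
rewrite /unif_sphere_as /unif_sphere.
match goal with |- ((fine (leb_outer ?X) / _)%:E = _)%E =>
  have HX : leb_outer X = 0 end.
  apply/eqP; rewrite eq_le leb_outer_ge0 andbT -N0; apply: leb_outer_mono.
  move=> y [t [x [/andP[t0 t1] [[[_ hx] xS] ->]]]].
  have hx' : ~ (gam x <> 0 /\ alp x <> 0) := hx.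
  split.
    rewrite /P gamZ alpZ.
    case: (eqVneq (gam x) 0) => [->|g]; first by rewrite !mulr0 mul0r.
    case: (eqVneq (alp x) 0) => [->|a']; first by rewrite !mulr0.
    by exfalso; apply: hx'; split; apply/eqP.
  move=> i; rewrite mxE normrM.
  have h1 : `|t| <= 1 by rewrite ger0_norm // ltW.
  have h2 := coord_le1 x i xS.
  have h3 := normr_ge0 t; have h4 := normr_ge0 (x i ord0).
  nra.
by rewrite HX /= mul0r.
Qed.
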